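(* Assume the setup below. For every $\mathbf k\in\mathbb N^d$ with $|\mathbf k|>0$, $$\partial^{\mathbf k}H\Big|_{w=0}=\sum_{\substack{\mathbf i,\mathbf j\ne\mathbf 0\\ \mathbf i+\mathbf j=\mathbf k}}\ \sum_{\substack{\mathbf 0\ne\mathbf s\le\mathbf i\\ \mathbf 0\ne\mathbf t\le\mathbf j}}C(\mathbf i,\mathbf j)\,S^{\mathbf i}_{\mathbf s}S^{\mathbf j}_{\mathbf t}\,\mathbb E_x\big[A^{\mathbf s}(x)A^{\mathbf t}(x)\big],$$ where $C(\mathbf i,\mathbf j)=\prod\binom{i_u+j_u}{i_u}$, the product running over all $d$ coordinates $u$ of $\mathbb N^d$, and $\mathbb E_x$ is expectation with respect to $q$.
   Context: Fix integers $r\ge1$ and, for $1\le a\le r$, integers $n_a\ge1$ and $p_a\ge1$; put $d=\sum_{a=1}^r p_a$. An error syndrome is a tuple $\gamma=(\gamma_1,\dots,\gamma_r)$ of functions $\gamma_a:\{1,\dots,n_a\}\to\{0,1,\dots,p_a\}$. Its weight is $\mathrm{wt}(\gamma)=(s^a_b)_{1\le a\le r,\,1\le b\le p_a}\in\mathbb N^d$ with $s^a_b=|\gamma_a^{-1}(b)|$. Multi-indices $\mathbf k=(k^a_b)\in\mathbb N^d$ are indexed the same way; write $\mathbf k^a=(k^a_1,\dots,k^a_{p_a})$, $|\mathbf k^a|=\sum_b k^a_b$, $|\mathbf k|=\sum_a|\mathbf k^a|$, and $\mathbf s\le\mathbf k$ means $s^a_b\le k^a_b$ for all $a,b$. Given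 a finite set $\mathcal Q$ and a function $\pi:\prod_{a=1}^r\{0,\dots,p_a\}^{n_a}\to\mathcal Q$, set $\mathrm{eval}(\pi,\gamma)=\pi(\gamma_1(1),\dots,\gamma_1(n_1),\dots,\gamma_r(1),\dots,\gamma_r(n_r))$ and, for $\tau\in\mathcal Q$, define the polynomial in variables $x^a_b$ ($1\le a\le r$, $0\le b\le p_a$) $$f^\tau_\pi=\sum_\gamma \delta_{\tau=\mathrm{eval}(\pi,\gamma)}\prod_{a=1}^r\prod_{c=1}^{n_a}x^a_{\gamma_a(c)}$$ (sum over all error syndromes). We regard it as a polynomial in $w=(w^a_b)_{1\le a\le r,\,1\le b\le p_a}$ via the substitution $x^a_0=1-\sum_{b=1}^{p_a}w^a_b$, $x^a_b=w^a_b$ for $b\ge1$; the point $w=0$ corresponds to all $x^a_0=1$ and all other $x^a_b=0$. Write $\partial^{\mathbf k}=\prod_{a,b}(\partial/\partial w^a_b)^{k^a_b}$. For $\mathbf s\le\mathbf k$, $$S^{\mathbf k}_{\mathbf s}=\prod_{a=1}^r\Big\{\delta_{n_a\ge|\mathbf k^a|}(-1)^{|\mathbf k^a|-|\mathbf s^a|}\frac{(n_a-|\mathbf s^a|)!}{(n_a-|\mathbf k^a|)!}\prod_{b=1}^{p_a}\frac{k^a_b!}{(k^a_b-s^a_b)!}\Big\},$$ interpreted as $0$ when some $n_a<|\mathbf k^a|$. Further let $I$ be a finite set, $q$ a probability distribution on $I$, $y:I\to\mathcal Q$ a function, and for each $x\in I$ let $\pi_x:\prod_a\{0,\dots,p_a\}^{n_a}\to\mathcal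 Q$ be a function with $\pi_x(0,\dots,0)=y(x)$. Put $g(x,w)=\sum_{\tau\ne y(x)}f^\tau_{\pi_x}(w)$, $H(w)=\sum_{x\in I}q(x)g(x,w)^2$, and $A^{\mathbf s}(x)=|\{\gamma:\mathrm{wt}(\gamma)=\mathbf s,\ \mathrm{eval}(\pi_x,\gamma)\ne y(x)\}|$. (In the paper, $\pi_x$ encodes the computation paths of a universal Turing machine simulating a fixed machine $M$ for $t$ steps on input $x$, $g(x,w)$ is the probability of an output error for the noisy code $w$ near the code of $M$, and $A^{\mathbf s}(x)$ counts weight-$\mathbf s$ error syndromes producing an output error.) *)

(* Defs.v *)
From HB Require Import structures.
From mathcomp Require Import all_boot all_order all_algebra.
From mathcomp Require Import mpoly.
Set Implicit Arguments. Unset Strict Implicit. Unset Printing Implicit Defensive.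
Import Order.TTheory GRing.Theory Num.Theory.
Local Open Scope ring_scope.

Section NoisyDefs.
Variables (r : nat) (n p : 'I_r -> nat).

(* index set of the variables w^a_b, 1 <= a <= r, 1 <= b <= p_a;
   the element (a, b') with b' : 'I_(p a) stands for b = b' + 1 *)
Definition idx := {a : 'I_r & 'I_(p a)}.
(* d = number of variables (= \sum_a p_a) *)
Definition nvars : nat := #|{: idx}|.
Definition var (a : 'I_r) (b : 'I_(p a)) : 'I_nvars :=
  enum_rank (Tagged (fun a => 'I_(p a)) b).

Definition coord (k : 'X_{1..nvars}) (a : 'I_r) (b : 'I_(p a)) : nat := k (var b).
Definition blockdeg (k : 'X_{1..nvars}) (a : 'I_r) : nat := (\sum_(b < p a) coord k b)%N.

Definition syndrome := {dffun forall a : 'I_r, {ffun 'I_(n a) -> 'I_(p a).+1}}.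
Definition zero_syn : syndrome :=
  finfun (fun a : 'I_r => [ffun c : 'I_(n a) => (ord0 : 'I_(p a).+1)]).

(* weight: s^a_b = |gamma_a^{-1}(b)| *)
Definition wt (g : syndrome) : 'X_{1..nvars} :=
  [multinom #|[set c | val (g (tag (enum_val i)) c) == (tagged (enum_val i)).+1]|
    | i < nvars].

Variable R : fieldType.

(* x^a_b after the substitution x^a_0 = 1 - \sum_b w^a_b, x^a_b = w^a_b *)
Definition xvar (a : 'I_r) (b : 'I_(p a).+1) : {mpoly R[nvars]} :=
  match unlift (ord0 : 'I_(p a).+1) b with
  | Some b' => 'X_(var b')
  | None => 1 - \sum_(b' < p a) 'X_(var b')
  end.

Variable Q : finType.

Definition fpoly (tau : Q) (pi : syndrome -> Q) : {mpoly R[nvars]} :=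
  \sum_(g : syndrome)
     (tau == pi g)%:R * \prod_(a < r) \prod_(c < n a) xvar (g a c).

Definition gpoly (pi : syndrome -> Q) (yx : Q) : {mpoly R[nvars]} :=
  \sum_(tau | tau != yx) fpoly tau pi.

Definition Hpoly (I : finType) (q : I -> R) (y : I -> Q) (pi : I -> syndrome -> Q)
  : {mpoly R[nvars]} :=
  \sum_(x : I) q x *: (gpoly (pi x) (y x)) ^+ 2.

Definition Scoef (k s : 'X_{1..nvars}) : R :=
  \prod_(a < r)
    (if (blockdeg k a <= n a)%N then
       (-1) ^+ (blockdeg k a - blockdeg s a)
       * ((n a - blockdeg s a)`!)%:R / ((n a - blockdeg k a)`!)%:R
       * \prod_(b < p a) (((coord k b)`!)%:R / ((coord k b - coord s b)`!)%:R)
     else 0).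

Definition Acount (pi : syndrome -> Q) (yx : Q) (s : 'X_{1..nvars}) : nat :=
  #|[set g : syndrome | (wt g == s) && (pi g != yx)]|.

End NoisyDefs.

Definition Cbin (m : nat) (i j : 'X_{1..m}) : nat := (\prod_(u < m) 'C(i u + j u, i u))%N.

(* Main.v *)
Require Import Defs.
From HB Require Import structures.
From mathcomp Require Import all_boot all_order all_algebra.
From mathcomp Require Import mpoly.
From mathcomp Require Import ring.
Import Order.TTheory GRing.Theory Num.Theory.
Local Open Scope ring_scope.
Set Implicit Arguments. Unset Strict Implicit. Unset Printing Implicit Defensive.

Section Aux.
Variables (r : nat) (p : 'I_r -> nat).
Local Notation N := (nvars p).

Lemma var_Tagged (t : idx p) : var (tagged t) = enum_rank t.
Proof. by case: t. Qed.

Lemma big_var (T : Type) (id0 : T) (op : Monoid.com_law id0) (F : 'I_N -> T) :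
  \big[op/id0]_(u : 'I_N) F u = \big[op/id0]_(a < r) \big[op/id0]_(b < p a) F (var b).
Proof.
rewrite (sig_big_dep xpredT (fun _ => xpredT) (fun a b => F (var b))) /=.
rewrite (reindex (@enum_rank (idx p))) /=; last first.
  by exists enum_val => x _; [rewrite enum_rankK | rewrite enum_valK].
by apply: eq_bigr => t _; rewrite var_Tagged.
Qed.

Lemma Tagged_eq a (b b' : 'I_(p a)) :
  (Tagged (fun a => 'I_(p a)) b == Tagged (fun a => 'I_(p a)) b') = (b == b').
Proof. by rewrite -tag_eqE /tag_eq /= eqxx /= tagged_asE. Qed.

Lemma cnt_var a (u : 'I_N) : (\sum_(b < p a) (var b == u))%N = (a == tag (enum_val u)).
Proof.
rewrite -[u]enum_valK enum_rankK; set t := enum_val u.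
transitivity (\sum_(b < p a) (Tagged (fun a => 'I_(p a)) b == t))%N.
  apply: eq_bigr => b _; rewrite /var; congr nat_of_bool; apply/eqP/eqP => [h|->] //; exact: enum_rank_inj h.
case: t => a' b' /=; move: b'.
case: (eqVneq a a') => [<-|neq] b'.
  rewrite (bigD1 b') //= Tagged_eq eqxx big1 // => b /negbTE.
  by rewrite Tagged_eq => ->.
by rewrite big1 // => b _; rewrite -tag_eqE /tag_eq /= (negbTE neq).
Qed.

End Aux.
Section Coef.
Variables (m : nat) (R : comNzRingType).

Lemma mnm_neq0 (e : 'X_{1..m}) : e != 0%MM -> exists i, e i != 0%N.
Proof.
move=> nz; apply/existsP; apply: contraR nz => /existsPn h.
apply/eqP/mnmP => i; rewrite mnm0E; apply/eqP; exact: negbNE (h i).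
Qed.

Lemma meval0_coef (f : {mpoly R[m]}) : f.@[fun _ => 0] = f@_0.
Proof.
rewrite [in LHS](mpolyE f) [in RHS](mpolyE f) !raddf_sum /=.
apply: eq_bigr => e _; rewrite mevalZ mevalX mcoeffZ mcoeffX; congr (_ * _).
case: (eqVneq e 0%MM) => [->|nz].
  by rewrite big1 // => i _; rewrite mnm0E expr0.
have [i hi] := @mnm_neq0 e nz.
by rewrite (bigD1 i) //= expr0n (negbTE hi) mul0r.
Qed.

Lemma mderivm_eval0 (k : 'X_{1..m}) (f : {mpoly R[m]}) :
  (mderivm k f).@[fun _ => 0] = (\prod_(u < m) (k u)`!)%:R * f@_k.
Proof.
rewrite meval0_coef [in LHS](mpolyE f) [in RHS](mpolyE f) !raddf_sum /=.
rewrite mulr_sumr; apply: eq_bigr => e _.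
rewrite mderivmZ mderivmX mcoeffZ mcoeffZ mcoeffZ mcoeffX mcoeffX.
rewrite [RHS]mulrCA; congr (_ * _).
case: (eqVneq e k) => [->|nek].
  have -> : (k - k = 0)%MM by apply/mnmP => i; rewrite mnmBE subnn mnm0E.
  by rewrite eqxx !mulr1; congr _%:R; apply: eq_bigr => i _; rewrite ffactnn.
rewrite mulr0; case: (eqVneq (e - k)%MM 0%MM) => [h|]; last by rewrite mulr0.
have lek : forall i, (e i <= k i)%N.
  by move=> i; move/mnmP: h => /(_ i); rewrite mnmBE mnm0E => /eqP; rewrite subn_eq0.
have [i hi] : exists i, e i != k i.
  apply/existsP; apply: contraR nek => /existsPn hh.
  by apply/eqP/mnmP => i; apply/eqP; exact: negbNE (hh i).
have lti : (e i < k i)%N by rewrite ltn_neqAle hi lek.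
by rewrite (bigD1 i) //= ffact_small // mul0n mul0r.
Qed.

End Coef.

Section Deriv.
Variables (r : nat) (p : 'I_r -> nat) (R : comNzRingType).
Local Notation N := (nvars p).

Definition Lp (a : 'I_r) : {mpoly R[N]} := 1 - \sum_(b < p a) 'X_(var b).
Definition Pp (z : 'I_r -> nat) : {mpoly R[N]} := \prod_(a < r) Lp a ^+ z a.

Lemma mderiv_XU (u v : 'I_N) : mderiv u ('X_v : {mpoly R[N]}) = (v == u)%:R.
Proof.
rewrite mderivX mnm1E; case: (eqVneq v u) => [->|_]; last by rewrite scale0r.
have -> : (U_(u) - U_(u) = 0)%MM by apply/mnmP => i; rewrite mnmBE subnn mnm0E.
by rewrite mpolyX0 scale1r.
Qed.

Lemma mderiv1 (u : 'I_N) : mderiv u (1 : {mpoly R[N]}) = 0.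
Proof. by rewrite -mpolyC1 mderivC. Qed.

Lemma mderiv_Lp a (u : 'I_N) : mderiv u (Lp a) = - ((a == tag (enum_val u))%:R).
Proof.
rewrite /Lp mderivB mderiv1 sub0r (big_morph (mderiv u) (@mderivD _ _ u) (@mderiv0 _ _ u)); congr (- _).
rewrite -(cnt_var a u) natr_sum; apply: eq_bigr => b _; exact: mderiv_XU.
Qed.

Lemma mderiv_exp (u : 'I_N) (f : {mpoly R[N]}) k :
  mderiv u (f ^+ k.+1) = (k.+1)%:R * f ^+ k * mderiv u f.
Proof.
elim: k => [|k IH]; first by rewrite expr1 expr0 mulr1 mul1r.
rewrite exprS mderivM IH [f ^+ k.+1]exprS -[(k.+2)%:R]natr1 -[(k.+1)%:R]natr1.
ring.
Qed.

Lemma mderiv_prod0 (u : 'I_N) (P : pred 'I_r) (F : 'I_r -> {mpoly R[N]}) :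
  (forall a, P a -> mderiv u (F a) = 0) -> mderiv u (\prod_(a | P a) F a) = 0.
Proof.
move=> h; apply: (big_ind (fun x => mderiv u x = 0)) => //.
- exact: mderiv1.
- by move=> x y hx hy; rewrite mderivM hx hy mul0r mulr0 addr0.
Qed.

Lemma mderiv_Pp (u : 'I_N) z :
  mderiv u (Pp z) = - ((z (tag (enum_val u)))%:R) *: Pp (fun a => z a - (a == tag (enum_val u)))%N.
Proof.
set a0 := tag (enum_val u).
rewrite /Pp (bigD1 a0) //= mderivM mderiv_prod0; last first.
  move=> a ha; case: (z a) => [|k]; first by rewrite expr0 mderiv1.
  by rewrite mderiv_exp mderiv_Lp (negbTE ha) oppr0 mulr0.
rewrite mulr0 addr0 [in RHS](bigD1 a0) //= eqxx.
have -> : \prod_(i < r | i != a0) Lp i ^+ (z i - (i == a0)) = \prod_(i < r | i != a0) Lp i ^+ z i.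
  by apply: eq_bigr => i /negbTE ->; rewrite subn0.
case: (z a0) => [|k]; first by rewrite expr0 mderiv1 mul0r scaleNr scale0r oppr0.
rewrite mderiv_exp mderiv_Lp eqxx subn1 /=.
by rewrite scaleNr scaler_nat; ring.
Qed.

End Deriv.

Section Deriv2.
Variables (r : nat) (p : 'I_r -> nat) (R : comNzRingType).
Local Notation N := (nvars p).

Lemma blockdeg0 a : blockdeg (0%MM : 'X_{1..N}) a = 0%N.
Proof. by rewrite /blockdeg big1 // => b _; rewrite /Defs.coord mnm0E. Qed.

Lemma blockdegD (e1 e2 : 'X_{1..N}) a :
  blockdeg (e1 + e2)%MM a = (blockdeg e1 a + blockdeg e2 a)%N.
Proof. by rewrite /blockdeg -big_split; apply: eq_bigr => b _; rewrite /Defs.coord mnmDE. Qed.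

Lemma blockdegU (u : 'I_N) a : blockdeg (U_(u))%MM a = (a == tag (enum_val u)).
Proof.
rewrite /blockdeg -cnt_var; apply: eq_bigr => b _; by rewrite /Defs.coord mnm1E eq_sym.
Qed.

Lemma mderivm_Pp (e : 'X_{1..N}) z :
  mderivm e (Pp p R z) =
  (\prod_(a < r) ((-1) ^+ (blockdeg e a) * ((z a) ^_ (blockdeg e a))%:R)) *:
     Pp p R (fun a => z a - blockdeg e a)%N.
Proof.
have [d] := ubnP (mdeg e); elim: d e z => // d IH e z; rewrite ltnS => hd.
case: (eqVneq e 0%MM) => [->|nz].
  rewrite mderivm0m big1 ?scale1r; last by move=> a _; rewrite blockdeg0 expr0 ffactn0 mul1r.
  by rewrite /Pp; apply: eq_bigr => a _; rewrite blockdeg0 subn0.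
have [u hu] := mnm_neq0 nz.
set e' := (e - U_(u))%MM.
have ee : e = (U_(u) + e')%MM.
  rewrite addmC submK //; apply/mnm_lepP => i; rewrite mnm1E.
  by case: eqP => [<-|]; rewrite ?lt0n.
have hd' : (mdeg e' < d)%N.
  by move: hd; rewrite ee mdegD mdeg1 add1n.
rewrite ee mderivmDm mderivmU1m mderiv_Pp mderivmZ IH // scalerA; congr (_ *: _).
  set a0 := tag (enum_val u).
  rewrite (bigD1 a0) //= [RHS](bigD1 a0) //= mulrA; congr (_ * _).
    rewrite blockdegD blockdegU eqxx add1n subn1 exprS ffactnS.
    by rewrite natrM mulN1r !mulNr mulrCA.
  by apply: eq_bigr => a /negbTE ha; rewrite blockdegD blockdegU ha subn0.
by apply: eq_bigr => a _; rewrite blockdegD blockdegU subnDA.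
Qed.

Lemma Pp_eval0 z : (Pp p R z).@[fun _ => 0] = 1.
Proof.
rewrite /Pp rmorph_prod big1 // => a _.
rewrite rmorphXn /Lp rmorphB rmorph1 rmorph_sum big1 ?subr0 ?expr1n // => b _; exact: mevalXU.
Qed.

End Deriv2.

Lemma prod_fiber (M : comNzRingType) (T : finType) (k : nat) (g : 'I_k -> T) (f : T -> M) :
  \prod_(c < k) f (g c) = \prod_(t : T) f t ^+ #|[set c | g c == t]|.
Proof.
rewrite (partition_big g xpredT) //=; apply: eq_bigr => t _.
rewrite (eq_bigr (fun _ => f t)) => [|c /eqP -> //].
by rewrite -prodr_const; apply: eq_bigl => c; rewrite inE.
Qed.

Lemma sum_fiber (T : finType) (k : nat) (g : 'I_k -> T) :
  (\sum_(t : T) #|[set c | g c == t]|)%N = k.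
Proof.
rewrite -[k in RHS]card_ord -sum1_card (partition_big g xpredT) //=.
apply: eq_bigr => t _; rewrite -sum1_card; apply: eq_bigl => c; by rewrite inE.
Qed.

Section Syn.
Variables (r : nat) (n p : 'I_r -> nat) (R : fieldType).
Local Notation N := (nvars p).

Definition Mg (g : syndrome n p) : {mpoly R[N]} :=
  \prod_(a < r) \prod_(c < n a) xvar R (g a c).
Definition zg (g : syndrome n p) (a : 'I_r) : nat := #|[set c | g a c == ord0]|.

Lemma xvar0 a : xvar R (ord0 : 'I_(p a).+1) = Lp p R a.
Proof. by rewrite /xvar unlift_none. Qed.

Lemma xvarS a (b : 'I_(p a)) : xvar R (lift ord0 b) = 'X_(var b).
Proof. by rewrite /xvar liftK. Qed.

Lemma wt_var (g : syndrome n p) a (b : 'I_(p a)) :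
  wt g (var b) = #|[set c | g a c == lift ord0 b]|.
Proof.
rewrite /wt mnmE /var enum_rankK /=; apply: eq_card => c; rewrite !inE.
by rewrite [in RHS]eqE.
Qed.

Lemma zg_bd (g : syndrome n p) a : (zg g a + blockdeg (wt g) a)%N = n a.
Proof.
rewrite -[in RHS](sum_fiber (g a)) big_ord_recl /zg; congr (_ + _)%N.
by apply: eq_bigr => b _; rewrite /Defs.coord wt_var.
Qed.

Lemma Mg_split (g : syndrome n p) : Mg g = Pp p R (zg g) * 'X_[wt g].
Proof.
rewrite /Mg mpolyXE_id big_var /Pp -big_split /=; apply: eq_bigr => a _.
rewrite prod_fiber big_ord_recl xvar0; congr (_ * _).
by apply: eq_bigr => b _; rewrite xvarS wt_var.
Qed.

End Syn.
Section Coef2.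
Variables (r : nat) (n p : 'I_r -> nat) (R : numFieldType).
Local Notation N := (nvars p).

Lemma fact_neq0 k : (k`!)%:R != 0 :> R.
Proof. by rewrite pnatr_eq0 -lt0n fact_gt0. Qed.

Lemma prod_fact_neq0 (e : 'X_{1..N}) : ((\prod_(u < N) (e u)`!)%N)%:R != 0 :> R.
Proof. by rewrite pnatr_eq0 -lt0n prodn_gt0 // => u; rewrite fact_gt0. Qed.

Lemma coefMX0 (f : {mpoly R[N]}) (s i : 'X_{1..N}) : ~~ (s <= i)%MM -> (f * 'X_[s])@_i = 0.
Proof.
move=> hs; rewrite mcoeffM big1 // => kk /eqP hk; rewrite mcoeffX.
case: eqP => [e|]; last by rewrite mulr0.
by exfalso; move/negP: hs; apply; rewrite hk e lem_addl.
Qed.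

Lemma coef_Mg (g : syndrome n p) (i : 'X_{1..N}) :
  (\prod_(u < N) (i u)`!)%:R * (Mg R g)@_i = if (wt g <= i)%MM then Scoef n R i (wt g) else 0.
Proof.
rewrite Mg_split; case: ifP => hs; last by rewrite coefMX0 ?hs // mulr0.
set s := wt g; set e := (i - s)%MM.
have ie : i = (s + e)%MM by rewrite addmC submK.
have hP : (\prod_(u < N) (e u)`!)%:R * (Pp p R (zg g))@_e =
          \prod_(a < r) ((-1) ^+ (blockdeg e a) * ((zg g a) ^_ (blockdeg e a))%:R).
  by rewrite -mderivm_eval0 mderivm_Pp mevalZ Pp_eval0 mulr1.
have -> : (Pp p R (zg g) * 'X_[s])@_i = (Pp p R (zg g))@_e by rewrite ie mcoeffMX.
have hi : ((\prod_(u < N) (i u)`!)%N)%:R =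
   (\prod_(u < N) (((i u)`!)%:R / ((e u)`!)%:R)) * ((\prod_(u < N) (e u)`!)%N)%:R :> R.
  rewrite !natr_prod -big_split /=; apply: eq_bigr => u _; by rewrite divfK ?fact_neq0.
rewrite hi -mulrA hP big_var /Scoef -big_split /=; apply: eq_bigr => a _.
have bde : blockdeg e a = (blockdeg i a - blockdeg s a)%N by rewrite ie blockdegD addKn.
have zE : zg g a = (n a - blockdeg s a)%N by rewrite -(zg_bd g a) addnK.
have hsi : (blockdeg s a <= blockdeg i a)%N by rewrite ie blockdegD leq_addr.
have hsn : (blockdeg s a <= n a)%N by rewrite -(zg_bd g a) leq_addl.
have -> : \prod_(b < p a) (((i (var b))`!)%:R / ((e (var b))`!)%:R) =
          \prod_(b < p a) (((Defs.coord i b)`!)%:R / ((Defs.coord i b - Defs.coord s b)`!)%:R :> R).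
  by apply: eq_bigr => b _; rewrite /e mnmBE.
rewrite bde zE; case: ifP => hin.
  rewrite [RHS]mulrC; congr (_ * _); rewrite -mulrA; congr (_ * _).
  have hd : (blockdeg i a - blockdeg s a <= n a - blockdeg s a)%N by rewrite leq_sub2r.
  have := ffact_fact hd; rewrite subnBA // subnK // => /(congr1 (fun x => x%:R : R)).
  by rewrite natrM => <-; rewrite mulfK ?fact_neq0.
rewrite ffact_small ?mulr0 //.
rewrite ltn_sub2rE //; by rewrite ltnNge hin.
Qed.
End Coef2.
Lemma mdeg_lem m (s i : 'X_{1..m}) : (s <= i)%MM -> (mdeg s <= mdeg i)%N.
Proof. by move=> h; rewrite !mdegE; apply: leq_sum => u _; exact: (mnm_lepP h u). Qed.

Section G.
Variables (r : nat) (n p : 'I_r -> nat) (R : numFieldType).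
Local Notation N := (nvars p).

Lemma wt0 (g : syndrome n p) : wt g = 0%MM -> g = zero_syn n p.
Proof.
move=> h; apply/ffunP => a; apply/ffunP => c; rewrite /zero_syn !ffunE.
case: (unliftP ord0 (g a c)) => [b e|//].
have : wt g (var b) = 0%N by rewrite h mnm0E.
rewrite wt_var => /eqP; rewrite cards_eq0 => /eqP/setP/(_ c).
by rewrite !inE e eqxx.
Qed.

Lemma gpolyE (Q : finType) (pi : syndrome n p -> Q) y :
  gpoly R pi y = \sum_(g : syndrome n p) (pi g != y)%:R * Mg R g.
Proof.
rewrite /gpoly /fpoly exchange_big /=; apply: eq_bigr => g _.
rewrite -mulr_suml; congr (_ * _).
case: (eqVneq (pi g) y) => [e|ne].
  by rewrite big1 // => t ht; rewrite e (negbTE ht).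
by rewrite (bigD1 (pi g)) //= eqxx big1 ?addr0 // => t /andP [_ /negbTE ->].
Qed.

Lemma G_formula (Q : finType) (pi : syndrome n p -> Q) y (hy : pi (zero_syn n p) = y)
   (b : nat) (i : 'X_{1..N < b}) :
  ((\prod_(u < N) (i u)`!)%N)%:R * (gpoly R pi y)@_i =
  \sum_(s : 'X_{1..N < b} | lem s i && (bmnm s != 0%MM)) Scoef n R i s * (Acount pi y s)%:R.
Proof.
rewrite gpolyE raddf_sum mulr_sumr /=.
under [RHS]eq_bigr => s _ do rewrite /Acount -sum1_card natr_sum big_mkcond mulr_sumr /=.
rewrite exchange_big /=; apply: eq_bigr => g _.
case: (eqVneq (pi g) y) => [e|ne].
  rewrite /= mul0r mcoeff0 mulr0 big1 // => s _; by rewrite inE e eqxx andbF mulr0.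
have wn : wt g != 0%MM by apply: contra ne => /eqP /wt0 ->; rewrite hy.
rewrite /= mul1r coef_Mg; case: ifP => hs; last first.
  rewrite big1 // => s /andP [hsi _]; rewrite inE ne andbT.
  case: eqP => [e|]; last by rewrite mulr0.
  by move: hs; rewrite e hsi.
have hb : (mdeg (wt g) < b)%N by apply: leq_ltn_trans (mdeg_lem hs) (bmdeg i).
rewrite (bigD1 (BMultinom hb)) /=; last by rewrite hs wn.
rewrite inE eqxx ne mulr1 big1 ?addr0 // => s /andP [_ hne].
rewrite inE ne andbT; case: eqP => [e|]; last by rewrite mulr0.
by exfalso; move/negP: hne; apply; apply/eqP/val_inj => /=; rewrite e.
Qed.

End G.
Lemma expand4 (R : comNzRingType) (I S : finType) (P1 P2 : pred S) (c : R) (q : I -> R)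
  (a1 a2 : S -> R) (A : I -> S -> R) :
  \sum_(s | P1 s) \sum_(t | P2 t) c * a1 s * a2 t * \sum_(x : I) q x * (A x s * A x t)
  = \sum_(x : I) q x * (c * (\sum_(s | P1 s) a1 s * A x s) * (\sum_(t | P2 t) a2 t * A x t)).
Proof.
under eq_bigr => s _ do (under eq_bigr => t _ do rewrite mulr_sumr; rewrite exchange_big /=).
rewrite exchange_big /=; apply: eq_bigr => x _.
rewrite -[c * _ * _]mulrA big_distrlr /= mulr_sumr mulr_sumr; apply: eq_bigr => s _.
rewrite mulr_sumr mulr_sumr; apply: eq_bigr => t _.
ring.
Qed.

Lemma expand4n (R : comNzRingType) (I S : finType) (P1 P2 : pred S) (c : R) (q : I -> R)
  (a1 a2 : S -> R) (A : I -> S -> nat) :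
  \sum_(s | P1 s) \sum_(t | P2 t) c * a1 s * a2 t * \sum_(x : I) q x * (A x s * A x t)%:R
  = \sum_(x : I) q x * (c * (\sum_(s | P1 s) a1 s * (A x s)%:R) * (\sum_(t | P2 t) a2 t * (A x t)%:R)).
Proof.
rewrite -(expand4 P1 P2 c q a1 a2 (fun x s => (A x s)%:R)).
apply: eq_bigr => s _; apply: eq_bigr => t _; congr (_ * _).
by apply: eq_bigr => x _; rewrite natrM.
Qed.

Lemma lem0 m (s : 'X_{1..m}) : (s <= 0)%MM -> s = 0%MM.
Proof. by move=> h; apply/mnmP => u; have := mnm_lepP h u; rewrite !mnm0E leqn0 => /eqP. Qed.

Unset Implicit Arguments. Set Strict Implicit.

Theorem mainTheorem7 (R : realFieldType) (r : nat) (n p : 'I_r -> nat)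
  (hn : forall a, (0 < n a)%N) (hp : forall a, (0 < p a)%N)
  (Q I : finType) (q : I -> R) (hq0 : forall x, 0 <= q x) (hq1 : \sum_(x : I) q x = 1)
  (y : I -> Q) (pi : I -> syndrome n p -> Q)
  (hpi : forall x, pi x (zero_syn n p) = y x)
  (k : 'X_{1..nvars p}) (hk : (0 < mdeg k)%N) :
  (mderivm k (Hpoly q y pi)).@[fun _ => 0] =
  \sum_(i : 'X_{1..(nvars p) < (mdeg k).+1})
   \sum_(j : 'X_{1..(nvars p) < (mdeg k).+1}
          | [&& (bmnm i + bmnm j == k)%MM, bmnm i != 0%MM & bmnm j != 0%MM])
    \sum_(s : 'X_{1..(nvars p) < (mdeg k).+1} | lem s i && (bmnm s != 0%MM))
     \sum_(t : 'X_{1..(nvars p) < (mdeg k).+1} | lem t j && (bmnm t != 0%MM))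
       (Cbin (bmnm i) (bmnm j))%:R * Scoef n R (bmnm i) (bmnm s) * Scoef n R (bmnm j) (bmnm t)
       * \sum_(x : I) q x * (Acount (pi x) (y x) s * Acount (pi x) (y x) t)%:R.
Proof.
set N := nvars p.
set B := (mdeg k).+1.
pose G x (i : 'X_{1..N < B}) : R :=
  ((\prod_(u < N) (i u)`!)%N)%:R * (gpoly R (pi x) (y x))@_i.
have G0 : forall x (i : 'X_{1..N < B}), bmnm i = 0%MM -> G x i = 0.
  move=> x i h; rewrite /G G_formula // big1 // => s /andP [hs hs0].
  by exfalso; move/negP: hs0; apply; apply/eqP/lem0; rewrite -h.
transitivity (\sum_(i : 'X_{1..N < B}) \sum_(j : 'X_{1..N < B} | (bmnm i + bmnm j == k)%MM)
   \sum_(x : I) q x * ((Cbin (bmnm i) (bmnm j))%:R * G x i * G x j)); last first.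
  apply: eq_bigr => i _; rewrite [RHS]big_mkcond [LHS]big_mkcond; apply: eq_bigr => j _.
  case: ifP => hij; last by rewrite andFb.
  case: (eqVneq (bmnm i) 0%MM) => [hi|hi].
    by rewrite /= big1 // => x _; rewrite G0 // mulr0 mul0r mulr0.
  case: (eqVneq (bmnm j) 0%MM) => [hj|hj].
    by rewrite /= big1 // => x _; rewrite (G0 x j) // mulr0 mulr0.
  rewrite /= expand4n; apply: eq_bigr => x _.
  by rewrite /G !G_formula ?hpi.
under [RHS]eq_bigr => i _ do rewrite exchange_big /=.
rewrite [RHS]exchange_big /=.
rewrite mderivm_eval0 /Hpoly raddf_sum mulr_sumr /=; apply: eq_bigr => x _.
rewrite mcoeffZ mulrCA.
transitivity (q x * \sum_(i : 'X_{1..N < B}) \sum_(j : 'X_{1..N < B} | (bmnm i + bmnm j == k)%MM)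
   ((Cbin (bmnm i) (bmnm j))%:R * G x i * G x j)); last first.
  by rewrite mulr_sumr; apply: eq_bigr => i _; rewrite mulr_sumr.
congr (q x * _).
rewrite expr2 mcoeffM mulr_sumr.
rewrite (pair_big_dep xpredT (fun i j => (bmnm i + bmnm j == k)%MM)) /=.
apply: eq_big => [kk|kk]; first by rewrite eq_sym.
move=> /eqP hk2; rewrite /G.
have hku : forall u, k u = (kk.1 u + kk.2 u)%N by move=> u; rewrite -mnmDE -hk2.
have hf : (\prod_(u < N) (k u)`!)%N =
   (Cbin kk.1 kk.2 * \prod_(u < N) (kk.1 u)`! * \prod_(u < N) (kk.2 u)`!)%N.
  rewrite /Cbin -!big_split /=; apply: eq_bigr => u _.
  by rewrite hku -(bin_fact (leq_addr (kk.2 u) (kk.1 u))) addKn mulnA.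
rewrite hf !natrM; ring.
Qed.
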